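(* Let $(X_1,Y_1),\dots,(X_{n+1},Y_{n+1})$ be data with $L_i=\mathcal{L}(f,X_i,Y_i)\in[0,1]$, $s:\mathcal{X}\to[0,1]$ a score, $w:\mathcal{X}\to(0,\infty)$ a weight function, $\alpha,\gamma\in(0,1)$, and $E_{\gamma,n+1}$ the weighted e-value below. If $\gamma\le\alpha$, then $$\mathbf{1}\{E_{\gamma,n+1}\ge1/\alpha\}=\mathbf{1}\Big\{\frac{w(X_{n+1})+\sum_{i=1}^nw(X_i)L_i\mathbf{1}\{s(X_i)\le s(X_{n+1})\}}{\sum_{i=1}^{n+1}w(X_i)}\le\gamma\Big\}.$$ If $\gamma>\alpha$, then $E_{\gamma,n+1}\ge1/\alpha$ if and only if both $\frac{w(X_{n+1})+\sum_{i=1}^nw(X_i)L_i\mathbf{1}\{s(X_i)\le s(X_{n+1})\}}{\sum_{i=1}^{n+1}w(X_i)}\le\gamma$ and, for all $t\in\mathcal{M}$ and $\ell\in[0,1]$, $\frac{\ell w(X_{n+1})+\sum_{i=1}^nw(X_i)L_i\mathbf{1}\{s(X_i)\le t\}}{\sum_{i=1}^{n+1}w(X_i)}\notin(\alpha,\gamma]$.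
   Context: Let $w_i=w(X_i)$, $\mathcal{M}=\{s(X_i)\}_{i=1}^{n+1}$, $F(t;\ell)=\frac{\sum_{i=1}^nw_iL_i\mathbf{1}\{s(X_i)\le t\}+w_{n+1}\ell\mathbf{1}\{s(X_{n+1})\le t\}}{\sum_{i=1}^{n+1}w_i}$, $t_\gamma(\ell)=\max\{t\in\mathcal{M}:F(t;\ell)\le\gamma\}$ ($\max\emptyset=-\infty$), and $E_{\gamma,n+1}=\inf_{\ell\in[0,1]}\frac{\mathbf{1}\{s(X_{n+1})\le t_\gamma(\ell)\}\sum_{i=1}^{n+1}w_i}{\sum_{i=1}^nw_iL_i\mathbf{1}\{s(X_i)\le t_\gamma(\ell)\}+w_{n+1}\ell\mathbf{1}\{s(X_{n+1})\le t_\gamma(\ell)\}}$, each ratio $0$ when its numerator is $0$ and $+\infty$ when the numerator is positive and the denominator $0$; $E_{\gamma,n+1}=0$ if $\inf_\ell t_\gamma(\ell)=-\infty$. *)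

(* Defs.v *)
From HB Require Import structures.
From mathcomp Require Import all_boot all_order all_algebra.
From mathcomp Require Import boolp classical_sets reals constructive_ereal ereal.
Set Implicit Arguments. Unset Strict Implicit. Unset Printing Implicit Defensive.
Import Order.TTheory GRing.Theory Num.Theory.
Local Open Scope ring_scope.
Local Open Scope classical_set_scope.

(* Indexing convention: calibration points are indices 0 .. n-1 (paper: 1..n),
   the test point is index n (paper: n+1). *)
Definition ind (R : realType) (b : bool) : R := if b then 1 else 0.

Section Evalue.
Variables (R : realType) (X : Type).
Variables (s w : X -> R) (L : nat -> R) (x : nat -> X) (n : nat).

Definition Wtot : R := \sum_(i < n.+1) w (x i).

Definition Mset : set R := [set t | exists2 i : nat, (i <= n)%N & t = s (x i)].

Definition Fw (t l : R) : R :=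
  (\sum_(i < n) w (x i) * L i * ind R (s (x i) <= t)
     + w (x n) * l * ind R (s (x n) <= t)) / Wtot.

(* t_gamma(l) = max {t in M : F(t;l) <= gamma}, with max of empty = -oo *)
Definition tgam (g l : R) : \bar R :=
  ereal_sup [set t%:E | t in [set t | Mset t /\ Fw t l <= g]].

Definition eratio (N D : R) : \bar R :=
  if N == 0 then 0%E else if D == 0 then +oo%E else (N / D)%:E.

Definition Eratio (g l : R) : \bar R :=
  let T := tgam g l in
  eratio (ind R ((s (x n))%:E <= T)%E * Wtot)
         (\sum_(i < n) w (x i) * L i * ind R ((s (x i))%:E <= T)%E
            + w (x n) * l * ind R ((s (x n))%:E <= T)%E).

Definition Evalue (g : R) : \bar R :=
  if ereal_inf [set tgam g l | l in [set l : R | 0 <= l <= 1]] == -oo%E then 0%E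
  else ereal_inf [set Eratio g l | l in [set l : R | 0 <= l <= 1]].

End Evalue.

(* Main.v *)
Require Import Defs.
From HB Require Import structures.
From mathcomp Require Import all_boot all_order all_algebra.
From mathcomp Require Import boolp classical_sets reals constructive_ereal ereal.
From mathcomp Require Import zify.
Import Order.TTheory GRing.Theory Num.Theory.
Local Open Scope ring_scope.

Lemma max_idx (R : realType) (f : nat -> R) (P : R -> Prop) k :
  (exists2 i, (i < k)%N & P (f i)) ->
  exists m, [/\ (m < k)%N, P (f m) & forall j, (j < k)%N -> P (f j) -> f j <= f m].
Proof.
elim: k => [[i]//|k IH] [i ik Pi].
have [[j jk Pj]|nex] := pselect (exists2 j, (j < k)%N & P (f j)).
- have [m [mk Pm Hm]] := IH (ex_intro2 _ _ j jk Pj).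
  have [Pk|nPk] := pselect (P (f k)).
  + have [le|lt] := leP (f k) (f m).
    * exists m; split => //; first by lia.
      move=> j'; rewrite ltnS leq_eqVlt => /orP [/eqP->//|j'k] Pj'; exact: Hm.
    * exists k; split => //.
      move=> j'; rewrite ltnS leq_eqVlt => /orP [/eqP->//|j'k] Pj'.
      exact: le_trans (Hm _ j'k Pj') (ltW lt).
  + exists m; split => //; first by lia.
    move=> j'; rewrite ltnS leq_eqVlt => /orP [/eqP->//|j'k] Pj'; exact: Hm.
- have ik' : i = k.
    apply/eqP; rewrite eqn_leq -ltnS ik /=; rewrite leqNgt; apply/negP => ik2.
    by apply: nex; exists i.
  subst i; exists k; split => //.
  move=> j'; rewrite ltnS leq_eqVlt => /orP [/eqP->//|j'k] Pj'.
  by exfalso; apply: nex; exists j'.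
Qed.

Section Main.
Local Open Scope classical_set_scope.
Local Open Scope ring_scope.
Variables (R : realType) (X : Type) (s w : X -> R) (L : nat -> R) (x : nat -> X) (n : nat).
Hypothesis L0 : forall i, (i < n)%N -> 0 <= L i.
Hypothesis w0 : forall z, 0 < w z.

Local Notation W := (Wtot w x n).
Local Notation Fw := (Fw s w L x n).
Local Notation tgam := (tgam s w L x n).
Definition Asum t := \sum_(i < n) w (x i) * L i * ind R (s (x i) <= t).

Lemma ind_ge0 b : 0 <= ind R b. Proof. by case: b. Qed.
Lemma ind_le (b c : bool) : (b -> c) -> ind R b <= ind R c.
Proof. by case: b; case: c => //= H; have := H isT. Qed.

Lemma Asum_ge0 t : 0 <= Asum t.
Proof.
apply: sumr_ge0 => i _; rewrite mulr_ge0 ?ind_ge0 // mulr_ge0 ?L0 // ltW //.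
Qed.

Lemma Asum_mono t t' : t <= t' -> Asum t <= Asum t'.
Proof.
move=> tt; apply: ler_sum => i _; apply: ler_wpM2l.
  by rewrite mulr_ge0 ?L0 // ltW.
by apply: ind_le => h; exact: le_trans h tt.
Qed.

Lemma W_gt0 : 0 < W.
Proof.
rewrite /Wtot big_ord_recl /=; apply: lt_le_trans (w0 (x 0)) _.
by rewrite lerDl; apply: sumr_ge0 => i _; exact: ltW.
Qed.

Lemma FwE t l : Fw t l = (Asum t + w (x n) * l * ind R (s (x n) <= t)) / W.
Proof. by []. Qed.

Lemma Fw_mono_t t t' l : 0 <= l -> t <= t' -> Fw t l <= Fw t' l.
Proof.
move=> l0 tt; rewrite !FwE; apply: ler_wpM2r; first by rewrite invr_ge0 ltW // W_gt0.
apply: lerD; first exact: Asum_mono.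
apply: ler_wpM2l; first exact: mulr_ge0 (ltW (w0 _)) l0.
by apply: ind_le => h; exact: le_trans h tt.
Qed.

Lemma Fw_mono_l t l l' : l <= l' -> Fw t l <= Fw t l'.
Proof.
move=> ll; rewrite !FwE; apply: ler_wpM2r; first by rewrite invr_ge0 ltW // W_gt0.
rewrite lerD2l; apply: ler_wpM2r; first exact: ind_ge0.
by rewrite ler_wpM2l // ltW.
Qed.

Definition ismax g l m := [/\ (m <= n)%N, Fw (s (x m)) l <= g &
  forall j, (j <= n)%N -> Fw (s (x j)) l <= g -> s (x j) <= s (x m)].

Lemma tgam_max g l m : ismax g l m -> tgam g l = (s (x m))%:E.
Proof.
case=> mn Pm Hm; rewrite /tgam; apply/le_anti/andP; split.
- apply: ge_ereal_sup => _ [t [[i ilen ->] Pt] <-]; rewrite lee_fin; exact: Hm.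
- apply: ereal_sup_ubound; exists (s (x m)) => //; split => //; by exists m.
Qed.

Lemma tgam_spec g l :
  (tgam g l = -oo%E /\ forall i, (i <= n)%N -> g < Fw (s (x i)) l) \/
  exists m, ismax g l m /\ tgam g l = (s (x m))%:E.
Proof.
have [ex|nex] := pselect (exists2 i, (i < n.+1)%N & Fw (s (x i)) l <= g).
- right; have [m [mn Pm Hm]] := @max_idx R (fun i => s (x i)) (fun t => Fw t l <= g) _ ex.
  have im : ismax g l m by split.
  by exists m; split => //; exact: tgam_max.
- left; split.
  + rewrite /tgam.
    set S := (X in ereal_sup X); have -> : S = set0.
      apply/seteqP; split => // y [t [[i ilen eti] Pt] _]; apply: nex; exists i => //; by rewrite -eti.
    exact: ereal_sup0.
  + move=> i iln; rewrite ltNge; apply/negP => Pi; apply: nex; by exists i.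
Qed.

Lemma eratio_spec (N D a : R) : 0 < N -> 0 <= D -> 0 < a ->
  ((1 / a)%:E <= eratio N D)%E <-> D <= a * N.
Proof.
move=> N0 D0 a0; rewrite /eratio (gt_eqF N0).
case: eqP => [->|/eqP Dn0].
  by split => _; [rewrite mulr_ge0 // ltW | exact: leey].
have Dp : 0 < D by rewrite lt0r Dn0.
rewrite lee_fin ler_pdivlMr // mul1r mulrC ler_pdivrMr // mulrC.
by split => /idP.
Qed.

Lemma ismax_sn g l m : Fw (s (x n)) 1 <= g -> 0 <= l <= 1 -> ismax g l m ->
  s (x n) <= s (x m).
Proof.
move=> c /andP[l0 l1] [mn Pm Hm]; apply: Hm => //.
apply: (le_trans _ c); exact: Fw_mono_l.
Qed.

Lemma Eratio_eq g l m : Fw (s (x n)) 1 <= g -> 0 <= l <= 1 -> ismax g l m ->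
  Eratio s w L x n g l = eratio W (Asum (s (x m)) + w (x n) * l).
Proof.
move=> c Il im; have snm := @ismax_sn _ _ _ c Il im.
rewrite /Eratio (@tgam_max _ _ _ im) lee_fin snm /= mul1r mulr1.
congr (eratio _ (_ + _)); apply: eq_bigr => i _; by rewrite lee_fin.
Qed.

Lemma negA g a : ~ (Fw (s (x n)) 1 <= g) -> 0 < a ->
  ~ ((1 / a)%:E <= Evalue s w L x n g)%E.
Proof.
move=> nc a0; rewrite /Evalue; case: ifP => _.
  by rewrite lee_fin leNgt divr_gt0.
move=> H.
have H1 : ((1 / a)%:E <= Eratio s w L x n g 1)%E.
  apply: le_trans H _; apply: ereal_inf_lbound; exists 1 => //.
  by rewrite /= ler01 lexx.
suff E0 : Eratio s w L x n g 1 = 0%E.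
  by move: H1; rewrite E0 lee_fin leNgt divr_gt0.
rewrite /Eratio; case: (tgam_spec g 1) => [[-> _]|[m [im ->]]].
  by rewrite leeNy_eq /= mul0r /eratio eqxx.
case: im => mn Pm Hm.
rewrite lee_fin.
have -> : (s (x n) <= s (x m)) = false.
  apply/negP => le; apply: nc; apply: le_trans Pm; exact: Fw_mono_t ler01 le.
by rewrite /= mul0r /eratio eqxx.
Qed.

Lemma posB g a : Fw (s (x n)) 1 <= g -> 0 < a ->
  ((1 / a)%:E <= Evalue s w L x n g)%E <->
  (forall l m, 0 <= l <= 1 -> ismax g l m -> Asum (s (x m)) + w (x n) * l <= a * W).
Proof.
move=> c a0.
have Tge : forall l, 0 <= l <= 1 -> ((s (x n))%:E <= tgam g l)%E.
  move=> l /andP[l0 l1]; apply: ereal_sup_ubound; exists (s (x n)) => //; split.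
    by exists n.
  by apply: le_trans c; exact: Fw_mono_l.
rewrite /Evalue ifF; last first.
  apply/negP => /eqP H.
  have : ((s (x n))%:E <= ereal_inf [set tgam g l | l in [set l : R | (0 <= l <= 1)%R]])%E.
    by apply: le_ereal_inf_tmp => _ [l Il <-]; exact: Tge.
  by rewrite H leeNy_eq.
have Dge : forall l m, 0 <= l <= 1 -> 0 <= Asum (s (x m)) + w (x n) * l.
  by move=> l m /andP[l0 _]; rewrite addr_ge0 ?Asum_ge0 // mulr_ge0 // ltW.
split.
- move=> H l m Il im.
  have H2 : (ereal_inf [set Eratio s w L x n g l | l in [set l : R | (0 <= l <= 1)%R]]
     <= Eratio s w L x n g l)%E by apply: ereal_inf_lbound; exists l.
  have := le_trans H H2; rewrite (@Eratio_eq _ _ _ c Il im).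
  by move/(@eratio_spec _ _ _ W_gt0 (Dge l m Il) a0).
- move=> H; apply: le_ereal_inf_tmp => _ [l Il <-].
  case: (tgam_spec g l) => [[Tl _]|[m [im _]]].
    by have := Tge l Il; rewrite Tl leeNy_eq.
  rewrite (@Eratio_eq _ _ _ c Il im); apply/(@eratio_spec _ _ _ W_gt0 (Dge l m Il) a0).
  exact: H.
Qed.

End Main.

Theorem propositionA1 (R : realType) (X Y : Type) (loss : X -> Y -> R)
  (x : nat -> X) (y : nat -> Y) (n : nat) (s w : X -> R) (alpha gamma : R) :
  (forall i, (i < n)%N -> 0 <= loss (x i) (y i) <= 1) ->
  (forall z, 0 <= s z <= 1) ->
  (forall z, 0 < w z) ->
  0 < alpha < 1 -> 0 < gamma < 1 ->
  let L := fun i => loss (x i) (y i) in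
  let E := Evalue s w L x n gamma in
  let W := Wtot w x n in
  let cond := (w (x n) + \sum_(i < n) w (x i) * L i * ind R (s (x i) <= s (x n))) / W
                <= gamma in
  (gamma <= alpha -> ((1 / alpha)%:E <= E)%E <-> cond) /\
  (alpha < gamma ->
     ((1 / alpha)%:E <= E)%E <->
     (cond /\
      forall t l, Mset s x n t -> 0 <= l <= 1 ->
        ~ (alpha < (l * w (x n) + \sum_(i < n) w (x i) * L i * ind R (s (x i) <= t)) / W
           <= gamma))).
Proof.
move=> HL Hs Hw /andP[a0 a1] /andP[g0 g1] L E W cond.
have L0 : forall i, (i < n)%N -> 0 <= L i by move=> i /HL /andP[].
have Wp : 0 < W by exact: (W_gt0 _ _ _ _ _ Hw).
have hc : cond = (Fw s w L x n (s (x n)) 1 <= gamma).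
  by rewrite /cond /Fw lexx /ind mulr1 mulr1 addrC.
have nA := negA R X s w L x n L0 Hw gamma alpha.
have pB := posB R X s w L x n L0 Hw gamma alpha.
split.
- move=> ga; split.
  + move=> H; rewrite hc; apply: contrapT => nc; exact: (nA nc a0 H).
  + rewrite hc => c; apply/(pB c a0) => l m Il im.
    have snm := ismax_sn R X s w L x n Hw _ _ _ c Il im.
    case: im => mn Pm _.
    move: Pm; rewrite FwE snm /= mulr1 ler_pdivrMr // => Pm.
    apply: le_trans Pm _; apply: ler_wpM2r => //; exact: ltW.
- move=> ag; split.
  + move=> H.
    have c : Fw s w L x n (s (x n)) 1 <= gamma.
      by apply: contrapT => nc; exact: (nA nc a0 H).
    split; first by rewrite hc.
    move=> t l [j jn ->] Il /andP[h1 h2].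
    have Hall := (pB c a0).1 H.
    case: (tgam_spec R X s w L x n gamma l) => [[_ Hlt]|[m [im _]]].
      have := Hlt n (leqnn n); rewrite ltNge => /negP; apply.
      apply: le_trans c; apply: (Fw_mono_l R X s w L x n Hw); by case/andP: Il.
    have snm := ismax_sn R X s w L x n Hw _ _ _ c Il im.
    have tm : s (x j) <= s (x m).
      case: (leP (s (x n)) (s (x j))) => [le|lt]; last exact: le_trans (ltW lt) snm.
      case: im => _ _ Hm; apply: Hm => //.
      rewrite FwE le /= mulr1 addrC [w _ * l]mulrC; exact: h2.
    have h3 := Hall l m Il im.
    move: h1; rewrite ltr_pdivlMr // => h1.
    have h4 : l * w (x n) + \sum_(i < n) w (x i) * L i * ind R (s (x i) <= s (x j))
              <= Asum R X s w L x n (s (x m)) + w (x n) * l.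
      rewrite addrC [l * _]mulrC lerD2r; exact: (Asum_mono R X s w L x n L0 Hw _ _ tm).
    by have := lt_le_trans h1 (le_trans h4 h3); rewrite ltxx.
  + case; rewrite hc => c Q; apply/(pB c a0) => l m Il im.
    have snm := ismax_sn R X s w L x n Hw _ _ _ c Il im.
    case: im => mn Pm _.
    move: Pm; rewrite FwE snm /= mulr1 => Pm.
    have nQ := Q (s (x m)) l (ex_intro2 _ _ m mn erefl) Il.
    rewrite leNgt; apply/negP => h; apply: nQ; apply/andP; split.
      by rewrite ltr_pdivlMr // [l * _]mulrC addrC.
    by rewrite [l * _]mulrC addrC.
Qed.
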